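(* Let $G$ be a graph with $m\ge1$ edges, let $k\ge1$ and $0\le p\le m$ be integers, $\ell=m-p$, and $\eta=k(\ell+2)$. Let $E$ be the classification instance $E(G,\eta)$ described in the context. Then $G$ has a set $U\subseteq V(G)$ with $|U|\le k$ that is incident to at least $p$ edges if and only if there is a decision tree $T$ with $|T|\le k$ and $|O(T,E)|\le \ell\eta$.
   Context: Fix an ordering $e_1,\dots,e_m$ of $E(G)$. For a positive integer $\eta$, $E(G,\eta)$ has features $V(G)\cup\{d_0\}$ (one ''vertex feature'' per vertex, plus $d_0$) and, for each $r\in[\eta]$ and $i\in[m]$: a negative example with $d_0=2m(r-1)+2i-1$ and, for each $v\in V(G)$, value $1$ if $v$ is an endpoint of $e_i$ and $0$ otherwise; and a positive example with $d_0=2m(r-1)+2i$ and value $0$ on every vertex feature. A decision tree (DT) is a rooted tree whose test nodes $v$ carry a feature $f(v)$ and integer threshold $\lambda(v)$ (examples with $e(f(v))\le\lambda(v)$ go left, others right) and whose leaves are labeled positive or negative. $|T|$ is the number of test nodes. An example is an outlier for $T$ if it reaches a leaf with the opposite label; $O(T,E)$ is the set of outliers. *)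

(* Defs.v *)
From mathcomp Require Import all_boot all_order all_algebra.
Set Implicit Arguments. Unset Strict Implicit. Unset Printing Implicit Defensive.
Import Order.TTheory GRing.Theory Num.Theory.

(* A simple graph on the finite vertex type V together with a fixed ordering
   e_1,...,e_m of its edges is given by the sequence es of endpoint pairs:
   no loops, and each unordered edge occurs exactly once. *)
Definition simple_edge_list (V : finType) (es : seq (V * V)) : Prop :=
  [/\ all (fun e => e.1 != e.2) es, uniq es &
      forall e, e \in es -> (e.2, e.1) \notin es].

(* Features: Some v is the vertex feature of v, None is d_0. *)
Definition feature (V : finType) := option V.

(* An example: a value for every feature, and a label (true = positive). *)
Definition example (V : finType) : Type := ((feature V -> int) * bool)%type.

Inductive DT (V : finType) : Type :=
| Leaf : bool -> DT V
| Node : feature V -> int -> DT V -> DT V -> DT V.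

Fixpoint dt_size (V : finType) (T : DT V) : nat :=
  match T with
  | Leaf _ => 0
  | Node _ _ l r => (dt_size l + dt_size r).+1
  end.

Fixpoint classify (V : finType) (T : DT V) (x : feature V -> int) : bool :=
  match T with
  | Leaf b => b
  | Node f t l r => if (x f <= t)%R then classify l x else classify r x
  end.

Definition outliers (V : finType) (T : DT V) (E : seq (example V)) :=
  [seq x <- E | classify T x.1 != x.2].

(* The two examples for r in [eta] and i in [m] (0-indexed: r0 = r-1,
   i0 = i-1), edge e = e_i. *)
Definition neg_ex (V : finType) (m r0 i0 : nat) (e : V * V) : example V :=
  (fun f => match f with
            | None => Posz (2 * m * r0 + 2 * i0 + 1)
            | Some v => Posz (nat_of_bool ((v == e.1) || (v == e.2)))
            end, false).

Definition pos_ex (V : finType) (m r0 i0 : nat) (e : V * V) : example V :=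
  (fun f => match f with
            | None => Posz (2 * m * r0 + 2 * i0 + 2)
            | Some v => Posz 0
            end, true).

Definition instance (V : finType) (es : seq (V * V)) (eta : nat)
  : seq (example V) :=
  flatten [seq [:: neg_ex (size es) r0 ie.1 ie.2; pos_ex (size es) r0 ie.1 ie.2]
          | r0 <- iota 0 eta, ie <- zip (iota 0 (size es)) es].

Definition incident (V : finType) (U : {set V}) (e : V * V) : bool :=
  (e.1 \in U) || (e.2 \in U).

(* Main.v *)
Require Import Defs.
From mathcomp Require Import all_boot all_order all_algebra.
From mathcomp Require Import zify.
Set Implicit Arguments. Unset Strict Implicit. Unset Printing Implicit Defensive.
Import Order.TTheory GRing.Theory Num.Theory.

Section Aux.
Variable V : finType.

Fixpoint vfeat (T : DT V) : seq V :=
  match T with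
  | Leaf _ => [::]
  | Node (Some v) _ l r => v :: vfeat l ++ vfeat r
  | Node None _ l r => vfeat l ++ vfeat r
  end.

Fixpoint dthr (T : DT V) : seq int :=
  match T with
  | Leaf _ => [::]
  | Node (Some v) _ l r => dthr l ++ dthr r
  | Node None t l r => t :: dthr l ++ dthr r
  end.

Lemma size_feat T : size (vfeat T) + size (dthr T) = dt_size T.
Proof.
elim: T => [b|[v|] t l IHl r IHr] //=; rewrite !size_cat /=; lia.
Qed.

Lemma classify_congr T (x y : feature V -> int) :
  (forall v, v \in vfeat T -> x (Some v) = y (Some v)) ->
  (forall t, t \in dthr T -> (x None <= t)%R = (y None <= t)%R) ->
  classify T x = classify T y.
Proof.
elim: T => [b|[v|] t l IHl r IHr] //= Hv Hd.
- have Hvl : forall z, z \in vfeat l -> x (Some z) = y (Some z).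
    by move=> z Hz; apply: Hv; rewrite inE mem_cat Hz orbT.
  have Hvr : forall z, z \in vfeat r -> x (Some z) = y (Some z).
    by move=> z Hz; apply: Hv; rewrite inE mem_cat Hz !orbT.
  have Hdl : forall z, z \in dthr l -> (x None <= z)%R = (y None <= z)%R.
    by move=> z Hz; apply: Hd; rewrite mem_cat Hz.
  have Hdr : forall z, z \in dthr r -> (x None <= z)%R = (y None <= z)%R.
    by move=> z Hz; apply: Hd; rewrite mem_cat Hz orbT.
  by rewrite Hv ?mem_head // IHl // IHr.
- have Hvl : forall z, z \in vfeat l -> x (Some z) = y (Some z).
    by move=> z Hz; apply: Hv; rewrite mem_cat Hz.
  have Hvr : forall z, z \in vfeat r -> x (Some z) = y (Some z).
    by move=> z Hz; apply: Hv; rewrite mem_cat Hz orbT.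
  have Hdl : forall z, z \in dthr l -> (x None <= z)%R = (y None <= z)%R.
    by move=> z Hz; apply: Hd; rewrite inE mem_cat Hz orbT.
  have Hdr : forall z, z \in dthr r -> (x None <= z)%R = (y None <= z)%R.
    by move=> z Hz; apply: Hd; rewrite inE mem_cat Hz !orbT.
  by rewrite Hd ?mem_head // IHl // IHr.
Qed.

Fixpoint chain (s : seq V) : DT V :=
  match s with
  | [::] => Leaf V true
  | v :: s' => Node (Some v) 0%R (chain s') (Leaf V false)
  end.

Lemma size_chain s : dt_size (chain s) = size s.
Proof. elim: s => //= v s ->; by rewrite addn0. Qed.

Lemma classify_chain s x :
  classify (chain s) x = all (fun v => x (Some v) <= 0)%R s.
Proof. elim: s => //= v s ->; by case: ifP. Qed.

Definition outl (T : DT V) (x : example V) := classify T x.1 != x.2.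

Lemma count_inst T (es : seq (V * V)) eta :
  count (outl T) (instance es eta) =
  sumn [seq sumn [seq count (outl T) [:: neg_ex (size es) r0 ie.1 ie.2;
                                        pos_ex (size es) r0 ie.1 ie.2]
                 | ie <- zip (iota 0 (size es)) es] | r0 <- iota 0 eta].
Proof.
rewrite /instance; elim: (iota 0 eta) => //= r s IH.
by rewrite flatten_cat count_cat IH count_flatten -map_comp.
Qed.


Lemma sumn_zip_ge (f : nat * (V * V) -> nat) (P : pred (V * V)) m :
  (forall i e, i < m -> P e -> 1 <= f (i, e)) ->
  forall t a, a + size t <= m ->
  count P t <= sumn [seq f ie | ie <- zip (iota a (size t)) t].
Proof.
move=> Hf; elim=> [|e t IH] a Ha //=.
rewrite -[_ + count _ _]/(nat_of_bool (P e) + count P t).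
apply: leq_add; last by apply: IH; rewrite /= in Ha; lia.
case: (boolP (P e)) => //= He; apply: Hf => //; rewrite /= in Ha; lia.
Qed.

Lemma sumn_zip_eq (f : nat * (V * V) -> nat) (P : pred (V * V)) :
  (forall i e, f (i, e) = P e) ->
  forall t a, sumn [seq f ie | ie <- zip (iota a (size t)) t] = count P t.
Proof. move=> Hf; elim=> [|e t IH] a //=; by rewrite IH Hf. Qed.

Lemma sumn_const (T : Type) (s : seq T) c :
  sumn [seq c | _ <- s] = size s * c.
Proof. elim: s => //= _ s ->; by rewrite mulSn. Qed.

Lemma sumn_ge_count (T : Type) (s : seq T) (f : T -> nat) (P : pred T) c :
  (forall x, P x -> c <= f x) -> count P s * c <= sumn [seq f x | x <- s].
Proof.
move=> H; elim: s => //= x s IH; rewrite mulnDl.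
apply: leq_add => //; case: (boolP (P x)) => /= Hx; rewrite ?mul1n ?mul0n //; exact: H.
Qed.

Lemma all_neg (U : {set V}) (e : V * V) :
  all (fun v : V => Posz (nat_of_bool ((v == e.1) || (v == e.2))) <= 0)%R (enum U)
  = ~~ incident U e.
Proof.
rewrite /incident; apply/allP/norP => [H|[H1 H2] v].
- split; apply/negP => Hin.
  + by have := H _ (etrans (mem_enum _ _) Hin); rewrite eqxx.
  + by have := H _ (etrans (mem_enum _ _) Hin); rewrite eqxx orbT.
- rewrite mem_enum => Hv.
  case: eqP => [E|_]; first by rewrite -E Hv in H1.
  case: eqP => [E|_]; first by rewrite -E Hv in H2.
  by [].
Qed.

End Aux.

Unset Implicit Arguments.
Set Strict Implicit.

Theorem lemma4 (V : finType) (es : seq (V * V)) (k p : nat) :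
  simple_edge_list es ->
  1 <= size es -> 1 <= k -> p <= size es ->
  let m := size es in
  let l := m - p in
  let eta := k * (l + 2) in
  (exists U : {set V}, #|U| <= k /\ p <= count (incident U) es) <->
  (exists T : DT V, dt_size T <= k /\
     size (outliers T (instance es eta)) <= l * eta).
Proof.
move=> _ Hm Hk Hp m l eta.
have Hcnt : forall U : {set V}, count (incident U) es + count (predC (incident U)) es = m.
  by move=> U; rewrite count_predC.
split.
- move=> [U [HU Hinc]].
  exists (chain (enum U)); split; first by rewrite size_chain -cardE.
  rewrite /outliers size_filter.
  have -> := count_inst.
  have Hin : forall r0,
    sumn [seq count (outl (chain (enum U)))
          [:: neg_ex (size es) r0 ie.1 ie.2; pos_ex (size es) r0 ie.1 ie.2]
        | ie <- zip (iota 0 (size es)) es] = count (predC (incident U)) es.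
    move=> r0; apply: sumn_zip_eq => i e.
    rewrite /= /outl /= !classify_chain all_neg /=.
    have -> : all (fun v : V => (Posz 0 <= 0)%R) (enum U) by apply/allP.
    by rewrite /= addn0; case: (incident U e).
  rewrite (eq_map Hin) sumn_const size_iota.
  have := Hcnt U; rewrite -/m => H; rewrite mulnC leq_mul2r; apply/orP; right.
  rewrite /l; lia.
- move=> [T [HT Hout]].
  exists [set v in vfeat T]; split.
    by rewrite cardsE; apply: leq_trans (card_size _) _; have := size_feat T; lia.
  rewrite leqNgt; apply/negP => Hlt.
  have El : l = m - p := erefl. have Ee : eta = k*(l+2) := erefl. have Em : m = size es := erefl.
  set U := [set v in vfeat T].
  set D := dthr T.
  set cnt := count (predC (incident U)) es.
  have Hcl : l + 1 <= cnt by have := Hcnt U; rewrite /cnt; move: Hlt; rewrite -/U; lia.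
  pose uncut r0 := all (fun t : int => (t < Posz (2 * m * r0 + 1))%R || (Posz (2 * m * r0 + 2 * m) <= t)%R) D.
  have Hinner : forall r0, uncut r0 ->
    cnt <= sumn [seq count (outl T)
          [:: neg_ex (size es) r0 ie.1 ie.2; pos_ex (size es) r0 ie.1 ie.2]
        | ie <- zip (iota 0 (size es)) es].
    move=> r0 Hu; apply: (sumn_zip_ge (m := m)) => //= i e Him Hne.
    have Hc : classify T (neg_ex m r0 i e).1 = classify T (pos_ex m r0 i e).1.
      apply: classify_congr => [v Hv|t Ht] /=.
      + have HvU : v \in U by rewrite inE.
        move: Hne; rewrite /incident negb_or => /andP [H1 H2].
        case: eqP => [E|_]; first by rewrite -E HvU in H1.
        case: eqP => [E|_]; first by rewrite -E HvU in H2.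
        by [].
      + move: Hu => /allP /(_ t Ht) /orP [H|H]; apply/idP/idP => H'; lia.
    rewrite /outl /= Hc; by case: (classify T _).
  have Hcut : count (predC uncut) (iota 0 eta) <= size D.
    pose g (t : int) := ((`|t|%N).-1 %/ (2 * m)).
    have Hg : forall r, ~~ uncut r -> r \in map g D.
      move=> r; rewrite /uncut -has_predC => /hasP [t Ht] /=.
      rewrite negb_or -!ltNge => /andP [H1 H2].
      suff -> : r = g t by apply: map_f.
      rewrite /g; case: t Ht H1 H2 => n Ht H1 H2; last by lia.
      have Hn : (2 * m * r + 1 <= n)%N /\ (n < 2 * m * r + 2 * m)%N by lia.
      rewrite /=.
      have -> : n.-1 = r * (2 * m) + (n.-1 - r*(2 * m)) by lia.
      rewrite divnMDl ?divn_small ?addn0 //; lia.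
    apply: (@leq_trans (count (mem (map g D)) (iota 0 eta))).
      by apply: sub_count => r; apply: Hg.
    rewrite -size_filter -(size_map g D).
    apply: uniq_leq_size; first by apply: filter_uniq; apply: iota_uniq.
    by move=> r; rewrite mem_filter => /andP [].
  have HD : size D <= k by have := size_feat T; rewrite -/D; lia.
  have Hunc : eta - k <= count uncut (iota 0 eta).
    have := count_predC uncut (iota 0 eta); rewrite size_iota; lia.
  have Htot : count uncut (iota 0 eta) * cnt <= size (outliers T (instance es eta)).
    rewrite /outliers size_filter.
    have -> := count_inst.
    by apply: sumn_ge_count.
  have : k * (l + 1) * (l + 1) <= l * eta.
    apply: leq_trans Hout; apply: leq_trans Htot.
    apply: leq_mul => //; rewrite /eta in Hunc *; lia.
  rewrite /eta; nia.
Qed.
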